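(* Let $(G,u)$ be a countable unperforated partially ordered abelian group with order unit $u$. Then $\{\tau\in S(G,u):\ker\tau=\mathrm{Inf}(G)\}$ is a dense $G_\delta$ subset of $S(G,u)$.
   Context: $u$ is an order unit: for every $g\in G$ there is $n\in\mathbb Z^+$ with $nu-g\ge0$. Unperforated: $ng\ge0$ for some $n\in\mathbb N$ implies $g\ge0$. A state is a homomorphism $\tau:G\to\mathbb R$ with $\tau(G^+)\ge0$ and $\tau(u)=1$; $S(G,u)$ is the set of states with the topology of pointwise convergence (a compact convex subset of $\mathbb R^G$). $\mathrm{Inf}(G)=\{g\in G:-\epsilon u\le g\le\epsilon u\text{ for all rational }\epsilon>0\}$. *)

(* Defs.v *)
From HB Require Import structures.
From mathcomp Require Import all_boot all_order all_algebra.
From mathcomp Require Import all_classical all_reals all_analysis.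
Import numFieldNormedType.Exports.
Set Implicit Arguments. Unset Strict Implicit. Unset Printing Implicit Defensive.
Import Order.TTheory GRing.Theory Num.Theory.
Local Open Scope classical_set_scope.
Local Open Scope ring_scope.

(* A partially ordered abelian group is a Z-module G with a positive cone P:
   x <= y iff y - x \in P. *)
Definition positive_cone (G : zmodType) (P : set G) : Prop :=
  [/\ P 0, (forall x y, P x -> P y -> P (x + y)) &
      (forall x, P x -> P (- x) -> x = 0)].

Definition order_unit (G : zmodType) (P : set G) (u : G) : Prop :=
  forall g : G, exists n : nat, (0 < n)%N /\ P (u *+ n - g).

Definition unperforated (G : zmodType) (P : set G) : Prop :=
  forall (g : G) (n : nat), (0 < n)%N -> P (g *+ n) -> P g.

Definition is_state (G : zmodType) (R : realType) (P : set G) (u : G)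
  (tau : G -> R) : Prop :=
  [/\ (forall x y, tau (x + y) = tau x + tau y),
      (forall g, P g -> 0 <= tau g) & tau u = 1].

Definition states (G : zmodType) (R : realType) (P : set G) (u : G)
  : set {ptws G -> R} := [set tau | is_state P u tau].

(* Inf(G): -eps u <= g <= eps u for all rational eps = p/q > 0,
   i.e. q g <= p u and -(p u) <= q g. *)
Definition Inf (G : zmodType) (P : set G) (u : G) : set G :=
  [set g | forall p q : nat, (0 < p)%N -> (0 < q)%N ->
           P (u *+ p - g *+ q) /\ P (g *+ q + u *+ p)].

Definition ker_of (G : zmodType) (R : realType) (tau : G -> R) : set G :=
  [set g | tau g = 0].

Definition dense_in (T : topologicalType) (S A : set T) : Prop :=
  A `<=` S /\
  forall O : set T, open O -> O `&` S !=set0 -> O `&` A !=set0.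

Definition Gdelta_in (T : topologicalType) (S A : set T) : Prop :=
  exists2 F : (set T)^nat, (forall i, open (F i)) & A = S `&` \bigcap_i F i.

(* Main.v *)
Require Import Defs.
From HB Require Import structures.
From mathcomp Require Import all_boot all_order all_algebra.
From mathcomp Require Import all_classical all_reals all_analysis.
Import numFieldNormedType.Exports.
Import Order.TTheory GRing.Theory Num.Theory.
Local Open Scope classical_set_scope.
Local Open Scope ring_scope.
From mathcomp Require Import ring lra.
Set Implicit Arguments. Unset Strict Implicit. Unset Printing Implicit Defensive.

Section Main.
Variables (G : countZmodType) (R : realType) (P : set G) (u : G).
Hypotheses (hP : positive_cone P) (hu : order_unit P u) (hun : unperforated P).

Lemma P0 : P 0. Proof. by case: hP. Qed.
Lemma PD x y : P x -> P y -> P (x + y). Proof. by case: hP => _ h _; apply: h. Qed.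
Lemma PMn x n : P x -> P (x *+ n).
Proof. move=> Px; elim: n => [|n IH]; first by rewrite mulr0n; exact: P0. by rewrite mulrSr; apply: PD. Qed.
Lemma Pu : P u.
Proof.
have [n [n0 h]] := hu (- u); rewrite opprK in h.
by apply: (@hun u n.+1) => //; rewrite mulrSr.
Qed.

Definition subgrp (H : set G) := H 0 /\ (forall x y, H x -> H y -> H (x - y)).
Definition rstate (H : set G) (f : G -> R) :=
  [/\ subgrp H, H u, (forall x y, H x -> H y -> f (x + y) = f x + f y),
      (forall x, H x -> P x -> 0 <= f x) & f u = 1].

Section Sub.
Variables (H : set G) (hH : subgrp H).
Lemma Hz0 : H 0. Proof. by case: hH. Qed.
Lemma HN x : H x -> H (- x). Proof. by move=> Hx; rewrite -sub0r; case: hH => h0 hs; apply: hs. Qed.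
Lemma HB x y : H x -> H y -> H (x - y). Proof. by case: hH => _ hs; apply: hs. Qed.
Lemma HD x y : H x -> H y -> H (x + y).
Proof. by move=> Hx Hy; rewrite -[y]opprK; apply: HB => //; apply: HN. Qed.
Lemma HMn x n : H x -> H (x *+ n).
Proof. move=> Hx; elim: n => [|n IH]; first by rewrite mulr0n; exact: Hz0. by rewrite mulrSr; apply: HD. Qed.

Variable (f : G -> R) (fD : forall {x y}, H x -> H y -> f (x + y) = f x + f y).
Lemma f0 : f 0 = 0.
Proof. have := fD Hz0 Hz0; rewrite addr0 => h; lra. Qed.
Lemma fN x : H x -> f (- x) = - f x.
Proof. move=> Hx; have := fD Hx (HN Hx); rewrite subrr f0 => h; lra. Qed.
Lemma fB x y : H x -> H y -> f (x - y) = f x - f y.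
Proof. by move=> Hx Hy; rewrite fD ?fN //; apply: HN. Qed.
Lemma fMn x n : H x -> f (x *+ n) = f x *+ n.
Proof. move=> Hx; elim: n => [|n IH]; first by rewrite !mulr0n f0. by rewrite !mulrSr fD ?IH //; apply: HMn. Qed.
End Sub.


Lemma divle (x y a b : R) : 0 < a -> 0 < b -> x * b <= y * a -> x / a <= y / b.
Proof.
move=> a0 b0 h; rewrite ler_pdivrMr // mulrAC ler_pdivlMr //.
Qed.

Section Ext.
Variables (H : set G) (f : G -> R) (x0 : G) (hf : rstate H f).

Definition Ub := [set r : R | exists h n, [/\ H h, (0 < n)%N, P (h - x0 *+ n) & r = f h / n%:R]].
Definition Lb := [set r : R | exists h n, [/\ H h, (0 < n)%N, P (x0 *+ n - h) & r = f h / n%:R]].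

Let hH : subgrp H. Proof. by case: hf. Qed.
Let fD : forall x y, H x -> H y -> f (x + y) = f x + f y. Proof. by case: hf. Qed.
Let fpos : forall x, H x -> P x -> 0 <= f x. Proof. by case: hf. Qed.
Let Hu : H u. Proof. by case: hf. Qed.

Lemma lb_le_ub r s : Lb r -> Ub s -> r <= s.
Proof.
move=> [h [n [Hh n0 Ph ->]]] [h' [m [Hh' m0 Ph' ->]]].
have PP : P (h' *+ n - h *+ m).
  have -> : h' *+ n - h *+ m = (h' - x0 *+ m) *+ n + (x0 *+ n - h) *+ m.
    by rewrite !mulrnBl -!mulrnA mulnC addrA addrNK.
  by apply: PD; apply: PMn.
have HH : H (h' *+ n - h *+ m) by apply: HB => //; apply: HMn.
have := fpos HH PP; rewrite (fB hH fD) ?(fMn hH fD) //; try apply: HMn => //.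
move=> h0; apply: divle; rewrite ?ltr0n //; by rewrite -subr_ge0 !mulr_natr.
Qed.

Lemma Ubne : Ub !=set0.
Proof.
have [n [n0 h]] := hu x0.
exists (f (u *+ n) / 1%:R), (u *+ n), 1%N; split => //; exact: (HMn hH).
Qed.

Lemma Lbne : Lb !=set0.
Proof.
have [n [n0 h]] := hu (- x0).
exists (f (- (u *+ n)) / 1%:R), (- (u *+ n)), 1%N; split => //.
  by apply: (HN hH); exact: (HMn hH).
by rewrite mulr1n opprK addrC; move: h; rewrite opprK.
Qed.

Definition cc := inf Ub.

Lemma cc_ge r : Lb r -> r <= cc.
Proof. move=> Lr; apply: lb_le_inf; first exact: Ubne. by move=> s Us; apply: lb_le_ub. Qed.

Lemma cc_le s : Ub s -> cc <= s.
Proof.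
move=> Us; apply: ge_inf => //.
have [r Lr] := Lbne; exists r => t Ut; exact: lb_le_ub.
Qed.

Lemma cc_eq z n : H z -> z = x0 *+ n.+1 -> f z = n.+1%:R * cc.
Proof.
move=> Hz ez.
have h1 : cc <= f z / n.+1%:R by apply: cc_le; exists z, n.+1; split => //; rewrite ez subrr; exact: P0.
have h2 : f z / n.+1%:R <= cc by apply: cc_ge; exists z, n.+1; split => //; rewrite ez subrr; exact: P0.
have : f z / n.+1%:R = cc by apply/eqP; rewrite eq_le h1 h2.
move=> <-; rewrite mulrC divfK //.
Qed.


Lemma fz d : H (x0 *~ d) -> f (x0 *~ d) = d%:~R * cc.
Proof.
case: d => [[|n]|n] Hd.
- by rewrite mulr0z mul0r (f0 hH fD).
- by rewrite (cc_eq (n:=n) Hd) // -pmulrn.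
- have ez : x0 *~ Negz n = - (x0 *+ n.+1) by rewrite NegzE mulrNz.
  rewrite ez in Hd *; have Hz : H (x0 *+ n.+1) by rewrite -[_ *+ _]opprK; exact: (HN hH).
  rewrite (fN hH fD Hz) (cc_eq (n:=n) Hz) // NegzE mulrNz mulNr //.
Qed.

Lemma cc_wd h h' k k' : H h -> H h' -> h + x0 *~ k = h' + x0 *~ k' ->
  f h + k%:~R * cc = f h' + k'%:~R * cc.
Proof.
move=> Hh Hh' e.
have ez : h' - h = x0 *~ (k - k').
  have -> : h' = h + x0 *~ k - x0 *~ k' by rewrite e addrK.
  by rewrite mulrzBr addrAC [h + _]addrC addrK.
have Hd : H (x0 *~ (k - k')) by rewrite -ez; exact: (HB hH).
have := fz Hd; rewrite -ez (fB hH fD) // => e2.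
have -> : f h' = f h + (k - k')%:~R * cc by rewrite -e2; lra.
rewrite intrB; lra.
Qed.

Definition Hx := [set y | exists h (k : int), H h /\ y = h + x0 *~ k].

Lemma ext_ex : exists f' : G -> R, forall y, Hx y ->
  exists h k, [/\ H h, y = h + x0 *~ k & f' y = f h + k%:~R * cc].
Proof.
have /choice [g hg] : forall y, exists r : R, Hx y ->
  exists h k, [/\ H h, y = h + x0 *~ k & r = f h + k%:~R * cc].
  move=> y; case: (pselect (Hx y)) => [[h [k [Hh ->]]]|nh].
    by exists (f h + k%:~R * cc) => _; exists h, k.
  by exists 0.
by exists g.
Qed.


Lemma extend : exists (H' : set G) (f' : G -> R),
  [/\ rstate H' f', H `<=` H', H' x0, (forall y, H y -> f' y = f y) &
      (forall a, (forall r, Ub r -> a <= r) -> a <= f' x0)].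
Proof.
have [g hg] := ext_ex.
have gval h k : H h -> g (h + x0 *~ k) = f h + k%:~R * cc.
  move=> Hh; have [h' [k' [Hh' e ->]]] := hg _ (ex_intro _ h (ex_intro _ k (conj Hh erefl))).
  by symmetry; apply: cc_wd.
have Hz0' : H 0 by case: hH.
exists Hx, g; split.
- split.
  + split; first by exists 0, 0; split => //; rewrite mulr0z addr0.
    move=> y z [h [k [Hh ->]]] [h' [k' [Hh' ->]]]; exists (h - h'), (k - k'); split.
      exact: (HB hH).
    by rewrite mulrzBr opprD addrACA.
  + by exists u, 0; split => //; rewrite mulr0z addr0.
  + move=> y z [h [k [Hh ->]]] [h' [k' [Hh' ->]]].
    have -> : h + x0 *~ k + (h' + x0 *~ k') = (h + h') + x0 *~ (k + k').
      by rewrite mulrzDr addrACA.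
    rewrite gval; last exact: (HD hH).
    rewrite gval // gval // fD // intrD.
    lra.
  + move=> y [h [k [Hh ->]]] Py; rewrite gval //.
    case: k Py => [[|n]|n] Py.
    * by rewrite mulr0z addr0 in Py; rewrite mul0r addr0; exact: fpos Hh Py.
    * have Hl : Lb (f (- h) / n.+1%:R).
        exists (- h), n.+1; split => //; first exact: (HN hH).
        by rewrite opprK addrC.
      have := cc_ge Hl; rewrite (fN hH fD Hh) ler_pdivrMr ?ltr0n // => hc.
      rewrite -pmulrn mulrC; set t := (cc * _) in hc *; lra.
    * have Hl : Ub (f h / n.+1%:R).
        exists h, n.+1; split => //.
      have := cc_le Hl; rewrite ler_pdivlMr ?ltr0n // => hc.
      rewrite NegzE mulrNz mulNr mulrC; set t := (cc * _) in hc *; lra.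
  + by have := gval u 0 Hu; rewrite mulr0z addr0 mul0r addr0 => ->; case: hf.
- by move=> y Hy; exists y, 0; split => //; rewrite mulr0z addr0.
- by exists 0, 1; split => //; rewrite add0r.
- by move=> y Hy; have := gval y 0 Hy; rewrite mulr0z addr0 mul0r addr0.
- move=> a ha; have := gval 0 1 Hz0'; rewrite add0r mul1r (f0 hH fD) add0r => ->.
  apply: lb_le_inf; first exact: Ubne. exact: ha.
Qed.

End Ext.

Lemma extend2 H f x0 : rstate H f -> exists p : set G * (G -> R),
  rstate p.1 p.2 /\ [/\ H `<=` p.1, p.1 x0, (forall y, H y -> p.2 y = f y) &
      (forall a, (forall r, Ub H f x0 r -> a <= r) -> a <= p.2 x0)].
Proof.
move=> hf; have [H' [f' [h1 h2 h3 h4 h5]]] := extend x0 hf.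
by exists (H', f').
Qed.

Section StateFacts.
Variable (t : G -> R) (ht : is_state P u t).
Let tD x y : t (x + y) = t x + t y. Proof. by case: ht. Qed.
Let sT : subgrp [set: G]. Proof. by []. Qed.
Lemma st0 : t 0 = 0. Proof. by apply: (f0 sT) => x y _ _; exact: tD. Qed.
Lemma stN x : t (- x) = - t x. Proof. by apply: (fN sT) => // x' y _ _; exact: tD. Qed.
Lemma stB x y : t (x - y) = t x - t y. Proof. by rewrite tD stN. Qed.
Lemma stMn x n : t (x *+ n) = t x *+ n. Proof. by apply: (fMn sT) => // x' y _ _; exact: tD. Qed.
Lemma stz x k : t (x *~ k) = t x *~ k.
Proof. case: k => n; first by rewrite -!pmulrn stMn. by rewrite !NegzE !mulrNz stN stMn. Qed.
Lemma stu : t u = 1. Proof. by case: ht. Qed.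
Lemma stuz k : t (u *~ k) = k%:~R. Proof. by rewrite stz stu. Qed.
End StateFacts.

Section Chain.
Variable (t : G -> R) (ht : is_state P u t) (y : G).

Definition Hu0 := [set h : G | exists k : int, h = u *~ k].

Lemma rs0 : rstate Hu0 t.
Proof.
case: ht => tD tP tu; split => //.
- split; first by exists 0; rewrite mulr0z.
  by move=> a b [k ->] [k' ->]; exists (k - k'); rewrite mulrzBr.
- by exists 1; rewrite mulr1z.
- by move=> a _ Pa; apply: (tP a Pa).
Qed.

Definition xs n := if n is n'.+1 then odflt 0 (unpickle n') else y.

Definition rsT := {p : set G * (G -> R) | rstate p.1 p.2}.

Definition stepc (s : rsT) (x : G) : rsT :=
  let e := cid (extend2 x (proj2_sig s)) in exist _ (sval e) (proj1 (svalP e)).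

Fixpoint chain n : rsT :=
  match n with 0 => exist _ (Hu0, t) rs0 | n'.+1 => stepc (chain n') (xs n') end.

Definition Hc n := (sval (chain n)).1.
Definition fc n := (sval (chain n)).2.

Lemma chain_rs n : rstate (Hc n) (fc n). Proof. exact: (svalP (chain n)). Qed.

Lemma chain_step n : [/\ Hc n `<=` Hc n.+1, Hc n.+1 (xs n),
   (forall z, Hc n z -> fc n.+1 z = fc n z) &
   (forall a, (forall r, Ub (Hc n) (fc n) (xs n) r -> a <= r) -> a <= fc n.+1 (xs n))].
Proof. rewrite /Hc /fc /= /stepc /=; exact: (proj2 (svalP (cid (extend2 (xs n) (proj2_sig (chain n)))))). Qed.

Lemma chain_mono m n z : (m <= n)%N -> Hc m z -> Hc n z /\ fc n z = fc m z.
Proof.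
move=> /subnK <-; elim: (n - m)%N => [|k IH] // Hz.
have [Hk fk] := IH Hz; have [s1 _ s3 _] := chain_step (k + m).
by rewrite addSn; split; [apply: s1 | rewrite s3].
Qed.

Definition sig_ g := fc (pickle g).+2 g.

Lemma in_chain g n : ((pickle g).+2 <= n)%N -> Hc n g /\ sig_ g = fc n g.
Proof.
move=> le.
have Hg : Hc (pickle g).+2 g.
  by have [_ + _ _] := chain_step (pickle g).+1; rewrite /= pickleK.
by have [h1 h2] := chain_mono le Hg; split => //; rewrite h2.
Qed.

Lemma sig_state : is_state P u sig_.
Proof.
split.
- move=> a b; set n := (maxn (pickle a) (maxn (pickle b) (pickle (a + b)))).+2.
  have l1 : ((pickle a).+2 <= n)%N by rewrite /n !ltnS leq_max leqnn.
  have l2 : ((pickle b).+2 <= n)%N by rewrite /n !ltnS !leq_max leqnn orbT.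
  have l3 : ((pickle (a + b)%R).+2 <= n)%N by rewrite /n !ltnS !leq_max leqnn !orbT.
  have [Ha ea] := in_chain l1.
  have [Hb eb] := in_chain l2.
  have [Hab eab] := in_chain l3.
  by rewrite ea eb eab; case: (chain_rs n) => _ _ + _ _; apply.
- move=> g Pg; have [Hg ->] := @in_chain g _ (leqnn _).
  by case: (chain_rs (pickle g).+2) => _ _ _ + _; apply.
- have [_ ->] := @in_chain u _ (leqnn _).
  by case: (chain_rs (pickle u).+2).
Qed.

Lemma sig_y : sig_ y = fc 1 y.
Proof.
have [_ Hy1 _ _] := chain_step 0.
have [_ ->] := @in_chain y _ (leqnn _).
by have [_ ->] := @chain_mono 1 (pickle y).+2 y isT Hy1.
Qed.

End Chain.
Lemma sep_state (t : G -> R) y a : is_state P u t -> (0 < a)%N -> ~ P (u *+ a - y) ->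
  exists s : G -> R, is_state P u s /\ a%:R <= s y.
Proof.
move=> ht a0 nP; exists (sig_ ht y); split; first exact: sig_state.
rewrite sig_y; have [_ _ _ hl] := chain_step ht y 0; apply: hl.
move=> r [h [n [[k ->] n0 Ph ->]]].
rewrite /fc /= (stuz ht) ler_pdivlMr ?ltr0n // leNgt; apply/negP => lt.
have lt' : k < (a * n)%N%:Z.
  by rewrite -(ltr_int R) -pmulrn natrM.
have [m em] : exists m : nat, (a * n)%N%:Z = k + m%:Z.
  exists `|(a * n)%N%:Z - k|%N; rewrite gez0_abs ?subr_ge0 ?ltW //.
  by rewrite [k + _]addrC subrK.
apply: nP; apply: (@hun _ n n0).
have -> : (u *+ a - y) *+ n = (u *~ k - y *+ n) + u *+ m.
  rewrite mulrnBl -mulrnA [u *+ (a * n)]pmulrn em mulrzDr -[u *~ m]pmulrn.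
  by rewrite addrAC.
by apply: PD => //; apply: PMn; exact: Pu.
Qed.

Lemma sep_nz (t : G -> R) g : is_state P u t -> ~ Inf P u g ->
  exists s : G -> R, is_state P u s /\ s g != 0.
Proof.
move=> ht nI.
have [p [q [p0 [q0 h]]]] : exists p q, [/\ (0 < p)%N, (0 < q)%N &
    ~ (P (u *+ p - g *+ q) /\ P (g *+ q + u *+ p))].
  apply: contrapT => nE; apply: nI => p q p0 q0; apply: contrapT => nn.
  by apply: nE; exists p, q; split.
case: (pselect (P (u *+ p - g *+ q))) => Pa.
- have nb : ~ P (u *+ p - - (g *+ q)) by rewrite opprK addrC => Pb; apply: h.
  have [s [hs le]] := sep_state ht p0 nb.
  exists s; split => //; apply/eqP => s0.
  move: le; rewrite (stN hs) (stMn hs) s0 mul0rn oppr0 leNgt => /negP; apply.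
  by rewrite ltr0n.
- have [s [hs le]] := sep_state ht p0 Pa.
  exists s; split => //; apply/eqP => s0.
  move: le; rewrite (stMn hs) s0 mul0rn leNgt => /negP; apply.
  by rewrite ltr0n.
Qed.

Lemma inf_ker (t : G -> R) g : is_state P u t -> Inf P u g -> t g = 0.
Proof.
move=> ht hI; apply/eqP; apply: contraT => nz.
have ap : 0 < `|t g| by rewrite normr_gt0.
set x := `|t g|^-1.
have x0 : 0 <= x by rewrite /x invr_ge0 ltW.
have := archi_boundP x0; set N := Num.Def.archi_bound x => hN.
have N0 : (0 < N)%N by rewrite -(ltr0n R); apply: le_lt_trans hN.
have [h1 h2] := hI 1%N N isT N0.
have k1 : 1 < `|t g| * N%:R.
  have : x * `|t g| < N%:R * `|t g| by rewrite ltr_pM2r.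
  by rewrite /x mulVf ?gt_eqF // mulrC.
have tP : forall z, P z -> 0 <= t z by case: ht.
have tD : forall a b, t (a + b) = t a + t b by case: ht.
have e1 := tP _ h1; have e2 := tP _ h2.
rewrite (stB ht) !(stMn ht) mulr1n (stu ht) -mulr_natr in e1.
rewrite tD !(stMn ht) mulr1n (stu ht) -mulr_natr in e2.
move: k1; set v := t g in e1 e2 *.
have [v0|v0] := leP 0 v.
- rewrite ger0_norm //; lra.
- rewrite ltr0_norm // mulNr; lra.
Qed.

Lemma bound_ex g : exists n : nat, P (u *+ n - g) /\ P (u *+ n + g).
Proof.
have [n1 [_ h1]] := hu g; have [n2 [_ h2]] := hu (- g); rewrite opprK in h2.
exists (n1 + n2)%N; split.
- by rewrite mulrnDr addrAC; apply: PD => //; apply: PMn; exact: Pu.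
- by rewrite addnC mulrnDr addrAC; apply: PD => //; apply: PMn; exact: Pu.
Qed.

Definition Bn g := projT1 (cid (bound_ex g)).
Definition B g : R := (Bn g)%:R.

Lemma B_ge0 g : 0 <= B g. Proof. by rewrite /B ler0n. Qed.

Lemma st_bound (t : G -> R) g : is_state P u t -> `|t g| <= B g.
Proof.
move=> ht; have [h1 h2] := projT2 (cid (bound_ex g)).
have tP : forall z, P z -> 0 <= t z by case: ht.
have tD : forall a b, t (a + b) = t a + t b by case: ht.
have e1 := tP _ h1; have e2 := tP _ h2.
rewrite (stB ht) (stMn ht) (stu ht) in e1; rewrite tD (stMn ht) (stu ht) in e2.
rewrite /B /Bn ler_norml; move: e1 e2; set b := (_ *+ _); rewrite /b -[1 *+ _]/(_%:R).
set c := (_%:R); move=> e1 e2; apply/andP; split; lra.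
Qed.

Definition hs i : G := odflt 0 (unpickle i).

Definition Inv k (M : G -> R) (D : R) :=
  [/\ is_state P u M, 0 < D, D <= 1 &
      forall i, (i < k)%N -> ~ Inf P u (hs i) -> 2 * B (hs i) * D < `|M (hs i)|].

Lemma mix_state (M s : G -> R) w : is_state P u M -> is_state P u s -> 0 <= w -> w <= 1 ->
  is_state P u (fun g => (1 - w) * M g + w * s g).
Proof.
case=> MD MP Mu [sD sP su] w0 w1; split.
- by move=> x y; rewrite MD sD; ring.
- move=> g Pg; apply: addr_ge0; apply: mulr_ge0 => //; [by rewrite subr_ge0 | exact: MP | exact: sP].
- by rewrite Mu su; ring.
Qed.

Lemma mix_diff (M s : G -> R) w g : is_state P u M -> is_state P u s -> 0 <= w ->
  `|(1 - w) * M g + w * s g - M g| <= 2 * B g * w.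
Proof.
move=> hM hs w0.
have -> : (1 - w) * M g + w * s g - M g = w * (s g - M g) by ring.
rewrite normrM ger0_norm // mulrC; apply: ler_wpM2r => //.
apply: le_trans (ler_normB _ _) _.
have := st_bound g hM; have := st_bound g hs; lra.
Qed.

Lemma step k M D : Inv k M D -> exists p : (G -> R) * R,
  [/\ Inv k.+1 p.1 p.2, p.2 <= D & forall g, `|p.1 g - M g| <= 2 * B g * (D - p.2)].
Proof.
case=> hM D0 D1 hI.
case: (pselect (Inf P u (hs k))) => hk.
  exists (M, D); split => //=.
    split => // i; rewrite ltnS leq_eqVlt => /orP [/eqP -> //|]; exact: hI.
  by move=> g; rewrite !subrr normr0 mulr0.
set h := hs k; have [s [hs' sh]] := sep_nz hM hk.
set a := M h; set b := s h.
have [w [w0 w1 wn]] : exists w, [/\ 0 < w, w <= D / 2 & (1 - w) * a + w * b != 0].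
  case: (eqVneq ((1 - D / 4) * a + D / 4 * b) 0) => e1; last first.
    by exists (D / 4); split => //; [apply: divr_gt0 | lra].
  exists (D / 2); split => //; first by apply: divr_gt0.
  apply/eqP => e2.
  have e3 : D / 4 * (b - a) = 0.
    have : (1 - D / 2) * a + D / 2 * b - ((1 - D / 4) * a + D / 4 * b) = D / 4 * (b - a) by field.
    by rewrite e1 e2 subrr.
  move/eqP: e3; rewrite mulf_eq0 => /orP [|]; first by move=> /eqP; lra.
  rewrite subr_eq0 => /eqP eba.
  move: e1; rewrite -eba; have -> : (1 - D / 4) * b + D / 4 * b = b by ring.
  by move=> eb; move: sh; rewrite -/b eb eqxx.
set M' := fun g => (1 - w) * M g + w * s g.
have hM' : is_state P u M' by apply: mix_state => //; [exact: ltW | lra].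
have dM g : `|M' g - M g| <= 2 * B g * w by apply: mix_diff => //; exact: ltW.
have M'h : M' h != 0 := wn.
have Bh := B_ge0 h.
set q := `|M' h| / (2 * B h + 1).
have q0 : 0 < q by apply: divr_gt0; [rewrite normr_gt0 | lra].
set D' := Num.min (D - w) q.
have D'w : D' <= D - w by rewrite ge_min lexx.
have D'q : D' <= q by rewrite ge_min lexx orbT.
exists (M', D'); split => /=.
- split => //.
  + rewrite lt_min; apply/andP; split => //; lra.
  + lra.
  + move=> i; rewrite ltnS leq_eqVlt => /orP [/eqP -> _|ik hi].
    * have hq : 2 * B h * q < `|M' h|.
        have e : q * (2 * B h + 1) = `|M' h| by rewrite /q divfK //; lra.
        rewrite -[X in _ < X]e mulrDr mulr1 [2 * B h * q]mulrC.
        set X := q * _; lra.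
      apply: le_lt_trans hq; apply: ler_wpM2l => //; lra.
    * have := hI i ik hi; have := dM (hs i).
      have hD : 2 * B (hs i) * D' <= 2 * B (hs i) * (D - w).
        by apply: ler_wpM2l => //; have := B_ge0 (hs i); lra.
      rewrite mulrBr in hD.
      have := lerB_dist (M (hs i)) (M' (hs i)); rewrite distrC.
      lra.
- lra.
- move=> g; apply: le_trans (dM g) _; apply: ler_wpM2l; first by have := B_ge0 g; lra.
  lra.
Qed.

Lemma noninc_cvg (v : R ^nat) (c : R) : (forall k, v k.+1 <= v k) -> (forall k, c <= v k) ->
  cvgn v.
Proof.
move=> hv hc; apply: cvgP; apply: nonincreasing_cvgn.
  move=> m n /subnK <-; elim: (n - m)%N => [|k IH] //; rewrite addSn.
  exact: le_trans (hv _) IH.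
by exists c => _ [k _ <-].
Qed.

Section Seq.
Variables (t : G -> R) (ht : is_state P u t) (d : R) (d0 : 0 < d) (d1 : d <= 1).

Lemma Inv0 : Inv 0 t d. Proof. by split. Qed.

Definition invT k := {p : (G -> R) * R | Inv k p.1 p.2}.

Fixpoint seqM k : invT k :=
  match k with
  | 0 => exist _ (t, d) Inv0
  | k'.+1 => let e := cid (step (svalP (seqM k'))) in
      exist _ (sval e) (let: And3 a _ _ := svalP e in a)
  end.

Definition Mk k := (sval (seqM k)).1.
Definition Dk k := (sval (seqM k)).2.

Lemma Inv_k k : Inv k (Mk k) (Dk k). Proof. exact: (svalP (seqM k)). Qed.

Lemma seq_step k : Dk k.+1 <= Dk k /\
  forall g, `|Mk k.+1 g - Mk k g| <= 2 * B g * (Dk k - Dk k.+1).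
Proof.
rewrite /Mk /Dk /=; set e := cid _.
by case: (svalP e) => _ h1 h2; split.
Qed.

Lemma Dk_ge0 k : 0 <= Dk k. Proof. by case: (Inv_k k) => _ /ltW. Qed.
Lemma Mk_state k : is_state P u (Mk k). Proof. by case: (Inv_k k). Qed.

Lemma Mdiff k j g : (k <= j)%N -> `|Mk j g - Mk k g| <= 2 * B g * (Dk k - Dk j).
Proof.
move=> /subnK <-; elim: (j - k)%N => [|n IH]; first by rewrite add0n !subrr normr0 mulr0.
rewrite addSn; have [_ h] := seq_step (n + k).
apply: le_trans (ler_distD (Mk (n + k) g) _ _) _.
have := h g; move: IH; rewrite !mulrBr; lra.
Qed.

Definition nu g := limn (fun k => Mk k g).

Lemma Mk_cvg g : cvgn (fun k => Mk k g).
Proof.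
have Bg := B_ge0 g.
set U := fun k => Mk k g + 2 * B g * Dk k.
set W := fun k => 2 * B g * Dk k.
have -> : (fun k => Mk k g) = (fun k => U k - W k) by apply/funext => k; rewrite /U /W; ring.
apply: (is_cvgB (f:=U) (g:=W)).
- apply: (@noninc_cvg _ (- B g)).
    move=> k; have [h1 h2] := seq_step k; have := h2 g; rewrite /U ler_norml => /andP [_].
    rewrite mulrBr; lra.
  move=> k; have := st_bound g (Mk_state k); rewrite ler_norml => /andP [h _].
  have : 0 <= 2 * B g * Dk k by apply: mulr_ge0; [lra | exact: Dk_ge0].
  rewrite /U; lra.
- apply: (@noninc_cvg _ 0).
    move=> k; have [h1 _] := seq_step k; rewrite /W; apply: ler_wpM2l => //; lra.
  move=> k; rewrite /W; apply: mulr_ge0; [lra | exact: Dk_ge0].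
Qed.

Lemma nu_close k g : `|nu g - Mk k g| <= 2 * B g * Dk k.
Proof.
have Bg := B_ge0 g.
have hD : forall j, 0 <= 2 * B g * Dk j by move=> j; apply: mulr_ge0; [lra | exact: Dk_ge0].
rewrite ler_norml; apply/andP; split.
- rewrite lerBrDr; apply: limr_ge; first exact: Mk_cvg.
  near=> j; have kj : (k <= j)%N by near: j; exact: nbhs_infty_ge.
  have := Mdiff g kj; rewrite ler_norml mulrBr => /andP [h _]; have := hD j; lra.
- rewrite lerBlDr; apply: limr_le; first exact: Mk_cvg.
  near=> j; have kj : (k <= j)%N by near: j; exact: nbhs_infty_ge.
  have := Mdiff g kj; rewrite ler_norml mulrBr => /andP [_ h]; have := hD j; lra.
Unshelve. all: by end_near.
Qed.

Lemma nu_state : is_state P u nu.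
Proof.
split.
- move=> x y; rewrite /nu.
  have -> : (fun k => Mk k (x + y)) = (fun k => Mk k x + Mk k y).
    by apply/funext => k; case: (Mk_state k).
  by rewrite (limD (f := fun k => Mk k x) (g := fun k => Mk k y)) //; apply: Mk_cvg.
- move=> g Pg; apply: limr_ge; first exact: Mk_cvg.
  by apply: nearW => k; case: (Mk_state k) => _ + _; apply.
- rewrite /nu; have -> : (fun k => Mk k u) = (fun=> 1).
    by apply/funext => k; case: (Mk_state k).
  by rewrite lim_cst.
Qed.

Lemma nu_ker : ker_of nu = Inf P u.
Proof.
apply/seteqP; split => g; last by move=> hI; exact: inf_ker nu_state hI.
rewrite /ker_of /= => ng; apply: contrapT => nI.
have eg : hs (pickle g) = g by rewrite /hs pickleK.
have [_ _ _ hI] := Inv_k (pickle g).+1.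
have := hI _ (ltnSn _); rewrite eg => /(_ nI) h1.
have := nu_close (pickle g).+1 g; rewrite ng sub0r normrN => h2.
lra.
Qed.

Lemma nu_t g : `|nu g - t g| <= 2 * B g * d.
Proof. exact: (nu_close 0 g). Qed.

End Seq.

Lemma approx_state (t : G -> R) (d : R) : is_state P u t -> 0 < d -> d <= 1 ->
  exists n : G -> R, [/\ is_state P u n, ker_of n = Inf P u &
     forall g, `|n g - t g| <= 2 * B g * d].
Proof.
move=> ht d0 d1; exists (nu ht d0 d1); split.
- exact: nu_state.
- exact: nu_ker.
- exact: nu_t.
Qed.
End Main.

Unset Implicit Arguments.
Lemma ptws_cvg (G : Type) (R : realType) (f_ : nat -> {ptws G -> R}) (t : {ptws G -> R}) :
  (forall g, (fun n => f_ n g) @ \oo --> t g) -> f_ @ \oo --> t.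
Proof.
move=> h.
apply/cvg_sup => i.
move=> A; rewrite nbhsE => -[B [[C oC eB] Bt] BA].
subst B.
have : nbhs (t i) C by apply: open_nbhs_nbhs; split.
move=> /h; rewrite nbhs_simpl => hC.
have hC2 : \forall n \near \oo, C (f_ n i) := hC.
have hA : \forall n \near \oo, A (f_ n) by apply: filterS hC2 => n hn; exact: BA.
exact: hA.
Qed.

Lemma open_eval (G : eqType) (R : realType) (g : G) (C : set R) :
  open C -> open [set f : {ptws G -> R} | C (f g)].
Proof.
move=> oC; rewrite openE => f Cf.
have : (nbhs f) --> f by apply: cvg_id.
move=> /cvg_sup => /(_ g) hh.
apply: hh.
rewrite nbhsE /=.
exists [set h : {ptws G -> R} | C (h g)] => //.
rewrite /open_nbhs; split => //.
by exists C.

Qed.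

Theorem mainTheorem9 (G : countZmodType) (R : realType) (P : set G) (u : G) :
  positive_cone P -> order_unit P u -> unperforated P ->
  let A := [set tau : {ptws G -> R} | @states G R P u tau /\ ker_of tau = Inf P u] in
  @dense_in {ptws G -> R} (@states G R P u) A /\ @Gdelta_in {ptws G -> R} (@states G R P u) A.
Proof.
move=> hP hu hun A; split.
- split; first by move=> tau [].
  move=> O oO [t [Ot St]].
  have /choice [f_ hf] : forall n : nat, exists nv : {ptws G -> R},
      [/\ is_state P u nv, ker_of nv = Inf P u &
          forall g, `|nv g - t g| <= 2 * B R hP hu hun g * (n.+1%:R)^-1].
    move=> n.
    have d0 : 0 < (n.+1%:R : R)^-1 by rewrite invr_gt0 ltr0n.
    have d1 : (n.+1%:R : R)^-1 <= 1 by rewrite invf_le1 ?ler1n ?ltr0n.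
    have [nv [h1 h2 h3]] := @approx_state G R P u hP hu hun t (n.+1%:R)^-1 St d0 d1.
    by exists nv.
  have cv : f_ @ \oo --> t.
    apply: ptws_cvg => g; apply/cvgrPdist_le => e e0.
    have Bg := B_ge0 R hP hu hun g.
    near=> n.
    have hn : 2 * B R hP hu hun g / e < n.+1%:R.
      near: n; apply: filterS (nbhs_infty_gtr (2 * B R hP hu hun g / e)) => n hn.
      by apply: lt_le_trans hn _; rewrite ler_nat.
    have [_ _ h3] := hf n; rewrite distrC; apply: le_trans (h3 g) _.
    rewrite ler_pdivrMr ?ltr0n //; rewrite ltr_pdivrMr // in hn.
    by rewrite [e * _]mulrC; exact: ltW.
  have : \forall n \near \oo, O (f_ n).
    by apply: cv; apply: open_nbhs_nbhs; split.
  move=> [N _ hN]; exists (f_ N); split; first by apply: (hN N) => /=.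
  by have [h1 h2 _] := hf N; split.
- exists (fun i => [set f : {ptws G -> R} | Inf P u (hs G i) \/ f (hs G i) != 0]).
    move=> i; case: (pselect (Inf P u (hs G i))) => hI.
      have -> : [set f : {ptws G -> R} | Inf P u (hs G i) \/ f (hs G i) != 0] = setT.
        by apply/seteqP; split => // f _; left.
      exact: openT.
    have -> : [set f : {ptws G -> R} | Inf P u (hs G i) \/ f (hs G i) != 0] =
       [set f : {ptws G -> R} | f (hs G i) != 0].
      by apply/seteqP; split => f /=; [case => // /hI | right].
    exact: (@open_eval G R (hs G i) [set x : R | x != 0] (@open_neq R 0)).
  apply/seteqP; split.
  + move=> f [Sf kf]; split => // i _.
    case: (pselect (Inf P u (hs G i))) => hI; [by left | right].
    apply/eqP => f0; apply: hI; rewrite -kf; exact: f0.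
  + move=> f [Sf hF]; split => //.
    apply/seteqP; split => g; last by move=> hI; exact: inf_ker Sf hI.
    rewrite /ker_of /= => f0; apply: contrapT => nI.
    have eg : hs G (pickle g) = g by rewrite /hs pickleK.
    have := hF (pickle g) I; rewrite eg => -[//|]; by rewrite f0 eqxx.
Unshelve. all: by end_near.
Qed.
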